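(* Let $G \le \mathrm{Sym}(\mathbb{N})$ be a countable cofinitary group and let $H$ be a countable group. Then there exist permutations $\vec f = \langle f_n : n \in \mathbb{N}\rangle$ in $\mathrm{Sym}(\mathbb{N})$ such that the subgroup generated by $\{f_n : n\in\mathbb{N}\}$ is isomorphic to $H$ and the subgroup $\langle G, \vec f\,\rangle$ generated by $G \cup \{f_n : n\in\mathbb{N}\}$ is cofinitary.
   Context: $\mathrm{Sym}(\mathbb{N})$ is the group of bijections $\mathbb{N}\to\mathbb{N}$ under composition. A permutation is cofinitary if it is the identity or has only finitely many fixed points; a subgroup of $\mathrm{Sym}(\mathbb{N})$ is cofinitary if all its elements are cofinitary. *)

(* Defs.v *)
Set Implicit Arguments.

Definition is_perm (f : nat -> nat) : Prop :=
  exists g : nat -> nat, (forall n, g (f n) = n) /\ (forall n, f (g n) = n).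

Definition compose (f g : nat -> nat) : nat -> nat := fun n => f (g n).

Definition cofinitary_perm (f : nat -> nat) : Prop :=
  (forall n, f n = n) \/ (exists N, forall n, f n = n -> n < N).

Definition is_subgroup_Sym (G : (nat -> nat) -> Prop) : Prop :=
  (forall f, G f -> is_perm f) /\
  G (fun n => n) /\
  (forall f g, G f -> G g -> G (compose f g)) /\
  (forall f g, G f -> (forall n, g (f n) = n) -> (forall n, f (g n) = n) -> G g).

Definition cofinitary_group (G : (nat -> nat) -> Prop) : Prop :=
  forall f, G f -> cofinitary_perm f.

Definition countable_set (G : (nat -> nat) -> Prop) : Prop :=
  exists e : nat -> (nat -> nat), forall f, G f -> exists k, e k = f.

Inductive gen (S : (nat -> nat) -> Prop) : (nat -> nat) -> Prop :=
| gen_base : forall f, S f -> gen S f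
| gen_id : gen S (fun n => n)
| gen_comp : forall f g, gen S f -> gen S g -> gen S (compose f g)
| gen_inv : forall f g, gen S f -> (forall n, g (f n) = n) ->
    (forall n, f (g n) = n) -> gen S g.

Record group_on (T : Type) := GroupOn {
  gmul : T -> T -> T;
  gone : T;
  ginv : T -> T;
  gmulA : forall x y z, gmul x (gmul y z) = gmul (gmul x y) z;
  gmul1 : forall x, gmul gone x = x;
  gmulV : forall x, gmul (ginv x) x = gone
}.

Definition countable_type (T : Type) : Prop :=
  exists e : nat -> T, forall x, exists k, e k = x.

Definition iso_to_perm_group (T : Type) (H : group_on T)
  (K : (nat -> nat) -> Prop) : Prop :=
  exists phi : T -> (nat -> nat),
    (forall x y, phi (gmul H x y) = compose (phi x) (phi y)) /\
    (forall x y, phi x = phi y -> x = y) /\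
    (forall x, K (phi x)) /\
    (forall f, K f -> exists x, phi x = f).

(* Main.v *)
Require Import Defs.
From Stdlib Require Import Arith Lia List ClassicalEpsilon Classical FunctionalExtensionality Cantor.
Import ListNotations.

Definition listmax (l : list nat) : nat := fold_right Nat.max 0 l.
Lemma In_le_listmax x l : In x l -> x <= listmax l.
Proof. induction l; simpl; intros Hx; [contradiction|].
  destruct Hx as [<-|Hx]; [lia|]. specialize (IHl Hx); lia. Qed.

Section Constr.
Variable G : (nat -> nat) -> Prop.
Hypothesis HG : is_subgroup_Sym G.
Hypothesis Hcof : cofinitary_group G.
Variable eG : nat -> (nat -> nat).
Variable T : Type.
Variable H : group_on T.
Variable eH : nat -> T.
Hypothesis HeH : forall x, exists k, eH k = x.

Notation mul := (gmul H).
Notation one := (gone H).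
Notation inv := (ginv H).

Lemma mulVr x : mul x (inv x) = one.
Proof.
  rewrite <- (gmul1 H (mul x (inv x))).
  rewrite <- (gmulV H (inv x)) at 1.
  rewrite <- gmulA. rewrite (gmulA H (inv x) x (inv x)). rewrite gmulV, gmul1.
  apply gmulV.
Qed.
Lemma mulr1 x : mul x one = x.
Proof. rewrite <- (gmulV H x), gmulA, mulVr, gmul1. reflexivity. Qed.

Definition entry := ((T * nat) * nat)%type.

Definition Good (s : nat) (L : list entry) (y : nat) : Prop :=
  ~ In y (map snd L) /\
  forall k, k < s -> G (eG k) -> (exists n, eG k n <> n) ->
    eG k y <> y /\ ~ In (eG k y) (map snd L) /\
    (forall z, In z (map snd L) -> eG k z <> y).

Lemma good_ev s L : exists B, forall y, B <= y -> Good s L y.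
Proof.
  induction s.
  - exists (S (listmax (map snd L))). intros y Hy. split.
    + intro Hin. apply In_le_listmax in Hin. lia.
    + intros; lia.
  - destruct IHs as [B HB].
    destruct (classic (G (eG s) /\ exists n, eG s n <> n)) as [[HGs [n0 Hn0]] | Hno].
    + destruct (Hcof _ HGs) as [Hid | [N HN]]; [contradiction (Hn0 (Hid n0))|].
      destruct (proj1 HG _ HGs) as [gi [Hgi1 Hgi2]].
      exists (Nat.max B (Nat.max N (Nat.max (S (listmax (map (eG s) (map snd L))))
                                           (S (listmax (map gi (map snd L))))))).
      intros y Hy. destruct (HB y ltac:(lia)) as [H1 H2]. split; [exact H1|].
      intros k Hk HGk Hnk.
      destruct (Nat.eq_dec k s) as [->|Hne]; [| apply H2; auto; lia].
      split; [|split].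
      * intro Hf. apply HN in Hf. lia.
      * intro Hin. apply (in_map gi) in Hin. rewrite Hgi1 in Hin.
        apply In_le_listmax in Hin. lia.
      * intros z Hz Heq. apply (in_map (eG s)) in Hz. rewrite Heq in Hz.
        apply In_le_listmax in Hz. lia.
    + exists B. intros y Hy. destruct (HB y Hy) as [H1 H2]. split; auto.
      intros k Hk HGk Hnk. destruct (Nat.eq_dec k s).
      * subst; exfalso; apply Hno; auto.
      * apply H2; auto; lia.
Qed.

Lemma goodex s L : exists y, Good s L y.
Proof. destruct (good_ev s L) as [B HB]. exists B. apply HB; lia. Qed.

Definition chooseY s L : nat := proj1_sig (constructive_indefinite_description _ (goodex s L)).
Lemma chooseY_good s L : Good s L (chooseY s L).
Proof. unfold chooseY. apply proj2_sig. Qed.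

Definition posn (j : nat) : T * nat := let '(k, i) := Cantor.of_nat j in (eH k, i).
Definition fresh (L : list entry) : nat := S (listmax (map snd (map fst L))).

Definition stepE (m : nat) (L : list entry) : list entry :=
  if excluded_middle_informative (In m (map snd L)) then L
  else L ++ [((one, fresh L), m)].
Definition stepO (s j : nat) (L : list entry) : list entry :=
  if excluded_middle_informative (In (posn j) (map fst L)) then L
  else L ++ [(posn j, chooseY s L)].
Definition step (s : nat) (L : list entry) : list entry :=
  if Nat.even s then stepE (Nat.div2 s) L else stepO s (Nat.div2 s) L.

Definition entry_ok s (L : list entry) (e : entry) : Prop :=
  (forall q, In q (map fst L) -> snd q <> snd (fst e)) \/ Good s L (snd e).

Lemma step_spec s L : step s L = L \/ exists e, step s L = L ++ [e] /\
  ~ In (fst e) (map fst L) /\ ~ In (snd e) (map snd L) /\ entry_ok s L e.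
Proof.
  unfold step. destruct (Nat.even s).
  - unfold stepE. destruct excluded_middle_informative as [Hi|Hi]; [left; auto|right].
    eexists; split; [reflexivity|]. simpl. split; [|split; auto].
    + intro Hin. apply (in_map snd) in Hin. apply In_le_listmax in Hin. simpl in Hin.
      unfold fresh in Hin. lia.
    + left. intros q Hq Heq. apply (in_map snd) in Hq. apply In_le_listmax in Hq.
      simpl in Heq. unfold fresh in Heq. lia.
  - unfold stepO. destruct excluded_middle_informative as [Hi|Hi]; [left; auto|right].
    eexists; split; [reflexivity|]. simpl. pose proof (chooseY_good s L) as Hg.
    split; [auto|split; [apply Hg|right; auto]].
Qed.

Definition Inv (L : list entry) : Prop :=
  forall p1 y1 p2 y2, In (p1, y1) L -> In (p2, y2) L -> (p1 = p2 <-> y1 = y2).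

Lemma Inv_app L e : Inv L -> ~ In (fst e) (map fst L) -> ~ In (snd e) (map snd L) ->
  Inv (L ++ [e]).
Proof.
  destruct e as [p y]; simpl. intros HI Hp Hy p1 y1 p2 y2 H1 H2.
  apply in_app_iff in H1; apply in_app_iff in H2; simpl in *.
  destruct H1 as [H1|[H1|[]]]; destruct H2 as [H2|[H2|[]]].
  - eauto.
  - inversion H2; subst. apply (in_map fst) in H1 as Hf. apply (in_map snd) in H1 as Hs.
    simpl in *. split; intro; subst; contradiction.
  - inversion H1; subst. apply (in_map fst) in H2 as Hf. apply (in_map snd) in H2 as Hs.
    simpl in *. split; intro; subst; contradiction.
  - inversion H1; inversion H2; subst. tauto.
Qed.

Fixpoint Lst (n : nat) : list entry :=
  match n with 0 => [] | S n => step n (Lst n) end.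

Lemma Lst_inv n : Inv (Lst n).
Proof.
  induction n; simpl.
  - intros p1 y1 p2 y2 [].
  - destruct (step_spec n (Lst n)) as [->|[e [-> [H1 [H2 _]]]]]; auto.
    apply Inv_app; auto.
Qed.

Lemma Lst_mono1 n e : In e (Lst n) -> In e (Lst (S n)).
Proof.
  simpl. destruct (step_spec n (Lst n)) as [->|[e' [-> _]]]; auto.
  intro; apply in_app_iff; auto.
Qed.

Lemma Lst_mono n m e : n <= m -> In e (Lst n) -> In e (Lst m).
Proof. induction 1; auto. intro; apply Lst_mono1; auto. Qed.

Lemma cov_pt m : In m (map snd (Lst (S (2 * m)))).
Proof.
  change (Lst (S (2 * m))) with (step (2 * m) (Lst (2 * m))).
  unfold step. rewrite Nat.even_even, Nat.div2_double. unfold stepE.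
  destruct excluded_middle_informative; auto.
  rewrite map_app. apply in_app_iff. simpl; auto.
Qed.

Lemma cov_pos j : In (posn j) (map fst (Lst (S (2 * j + 1)))).
Proof.
  change (Lst (S (2 * j + 1))) with (step (2 * j + 1) (Lst (2 * j + 1))).
  unfold step. rewrite Nat.even_odd, Nat.div2_odd'. unfold stepO.
  destruct excluded_middle_informative; auto.
  rewrite map_app. apply in_app_iff. simpl; auto.
Qed.


Definition Assoc (p : T * nat) (y : nat) : Prop := exists n, In (p, y) (Lst n).

Lemma Assoc_common p1 y1 p2 y2 : Assoc p1 y1 -> Assoc p2 y2 -> (p1 = p2 <-> y1 = y2).
Proof.
  intros [n1 H1] [n2 H2]. apply (Lst_inv (Nat.max n1 n2)).
  - apply (Lst_mono n1); auto; lia.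
  - apply (Lst_mono n2); auto; lia.
Qed.

Lemma ex_pos y : exists p, Assoc p y.
Proof.
  pose proof (cov_pt y) as Hc. apply in_map_iff in Hc. destruct Hc as [[p z] [Hz Hin]].
  simpl in Hz; subst. exists p, (S (2 * y)); auto.
Qed.

Lemma ex_val p : exists y, Assoc p y.
Proof.
  destruct p as [a i]. destruct (HeH a) as [k Hk].
  pose proof (cov_pos (Cantor.to_nat (k, i))) as Hc.
  unfold posn in Hc. rewrite Cantor.cancel_of_to, Hk in Hc.
  apply in_map_iff in Hc. destruct Hc as [[p z] [Hz Hin]]. simpl in Hz; subst.
  exists z. eexists; eauto.
Qed.

Definition pos (y : nat) : T * nat := proj1_sig (constructive_indefinite_description _ (ex_pos y)).
Definition bet (p : T * nat) : nat := proj1_sig (constructive_indefinite_description _ (ex_val p)).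
Lemma pos_spec y : Assoc (pos y) y.
Proof. unfold pos. apply proj2_sig. Qed.
Lemma bet_spec p : Assoc p (bet p).
Proof. unfold bet. apply proj2_sig. Qed.
Lemma bet_pos y : bet (pos y) = y.
Proof. apply (Assoc_common _ _ _ _ (bet_spec (pos y)) (pos_spec y)). auto. Qed.
Lemma pos_bet p : pos (bet p) = p.
Proof. apply (Assoc_common _ _ _ _ (pos_spec (bet p)) (bet_spec p)). auto. Qed.
Lemma pos_of_in p y n : In (p, y) (Lst n) -> pos y = p.
Proof. intro Hin. apply (Assoc_common _ _ _ _ (pos_spec y) (ex_intro _ n Hin)). auto. Qed.

Definition rho (h : T) (x : nat) : nat := bet (mul h (fst (pos x)), snd (pos x)).

Lemma pos_rho h x : pos (rho h x) = (mul h (fst (pos x)), snd (pos x)).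
Proof. unfold rho. apply pos_bet. Qed.

Lemma rho_mul a b x : rho (mul a b) x = rho a (rho b x).
Proof. unfold rho at 2. rewrite pos_rho. simpl. rewrite gmulA. reflexivity. Qed.

Lemma rho_one x : rho one x = x.
Proof. unfold rho. rewrite gmul1, <- surjective_pairing. apply bet_pos. Qed.

Lemma rho_inv1 h x : rho (inv h) (rho h x) = x.
Proof. rewrite <- rho_mul, gmulV. apply rho_one. Qed.
Lemma rho_inv2 h x : rho h (rho (inv h) x) = x.
Proof. rewrite <- rho_mul, mulVr. apply rho_one. Qed.

Lemma rho_fix h x : rho h x = x -> h = one.
Proof.
  intro E. apply (f_equal pos) in E. rewrite pos_rho in E.
  destruct (pos x) as [a i]. simpl in E. inversion E as [E1].
  rewrite <- (mulr1 h), <- (mulVr a), gmulA, E1. reflexivity.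
Qed.

Lemma first_stage (P : nat -> Prop) n : ~ P 0 -> P n -> exists s, ~ P s /\ P (S s).
Proof.
  intros H0 Hn. induction n; [contradiction|].
  destruct (classic (P n)) as [Hp|Hp]; eauto.
Qed.

Lemma ex_t y : exists s, ~ In y (map snd (Lst s)) /\ In y (map snd (Lst (S s))).
Proof. apply (first_stage (fun s => In y (map snd (Lst s))) (S (2 * y))); [simpl; auto | apply cov_pt]. Qed.

Definition tm (y : nat) : nat := proj1_sig (constructive_indefinite_description _ (ex_t y)).

Lemma tm_entry y : Lst (S (tm y)) = Lst (tm y) ++ [(pos y, y)] /\
  ~ In y (map snd (Lst (tm y))) /\ entry_ok (tm y) (Lst (tm y)) (pos y, y).
Proof.
  pose proof (proj2_sig (constructive_indefinite_description _ (ex_t y))) as [H1 H2].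
  fold (tm y) in H1, H2.
  change (Lst (S (tm y))) with (step (tm y) (Lst (tm y))) in *.
  destruct (step_spec (tm y) (Lst (tm y))) as [E|[e [E [He1 [He2 He3]]]]].
  - rewrite E in H2; contradiction.
  - rewrite E in *. rewrite map_app in H2. apply in_app_iff in H2.
    destruct H2 as [H2|[H2|[]]]; [contradiction|]. destruct e as [p z]; simpl in H2; subst z.
    assert (pos y = p).
    { apply (pos_of_in _ _ (S (tm y))). simpl. rewrite E. apply in_app_iff; simpl; auto. }
    subst p. auto.
Qed.

Lemma tm_in y : In (pos y, y) (Lst (S (tm y))).
Proof. rewrite (proj1 (tm_entry y)). apply in_app_iff; simpl; auto. Qed.

Lemma key u w : tm u <= tm w -> u <> w -> In (pos u, u) (Lst (tm w)).
Proof.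
  intros Hle Hne. destruct (Nat.eq_dec (tm u) (tm w)) as [E|E].
  - pose proof (tm_in u) as Hu. rewrite E, (proj1 (tm_entry w)) in Hu.
    apply in_app_iff in Hu. destruct Hu as [Hu|[Hu|[]]]; auto.
    inversion Hu; subst; contradiction.
  - apply (Lst_mono (S (tm u))); [lia|apply tm_in].
Qed.

Definition forced y := forall q, In q (map fst (Lst (tm y))) -> snd q <> snd (pos y).
Definition chosen y := Good (tm y) (Lst (tm y)) y.

Lemma forced_or_chosen y : forced y \/ chosen y.
Proof. destruct (tm_entry y) as [_ [_ [Hf|Hc]]]; [left|right]; auto. Qed.

Lemma LH1 h u : h <> one -> forced (rho h u) -> tm (rho h u) < tm u.
Proof.
  intros Hh Hf. apply Nat.nle_gt. intro Hle.
  assert (Hne : u <> rho h u) by (intro E; apply Hh; apply (rho_fix h u); auto).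
  pose proof (key _ _ Hle Hne) as Hin. apply (in_map fst) in Hin.
  apply (Hf _ Hin). rewrite pos_rho. reflexivity.
Qed.

Lemma LH2 h u : h <> one -> forced u -> tm u < tm (rho h u).
Proof.
  intros Hh Hf. apply Nat.nle_gt. intro Hle.
  assert (Hne : rho h u <> u) by (intro E; apply Hh; apply (rho_fix h u); auto).
  pose proof (key _ _ Hle Hne) as Hin. apply (in_map fst) in Hin.
  apply (Hf _ Hin). rewrite pos_rho. reflexivity.
Qed.

Lemma LG1 k u : G (eG k) -> (exists n, eG k n <> n) -> k < tm (eG k u) ->
  chosen (eG k u) -> tm (eG k u) < tm u.
Proof.
  intros HGk Hn Hk Hc. apply Nat.nle_gt. intro Hle.
  destruct Hc as [_ Hc]. destruct (Hc k Hk HGk Hn) as [A [B C]].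
  assert (Hne : u <> eG k u) by (intro E; apply A; rewrite <- !E; reflexivity).
  pose proof (key _ _ Hle Hne) as Hin. apply (in_map snd) in Hin.
  apply (C _ Hin). reflexivity.
Qed.

Lemma LG2 k u : G (eG k) -> (exists n, eG k n <> n) -> k < tm u ->
  chosen u -> tm u < tm (eG k u).
Proof.
  intros HGk Hn Hk Hc. apply Nat.nle_gt. intro Hle.
  destruct Hc as [_ Hc]. destruct (Hc k Hk HGk Hn) as [A [B C]].
  assert (Hne : eG k u <> u) by auto.
  pose proof (key _ _ Hle Hne) as Hin. apply (in_map snd) in Hin. contradiction.
Qed.


Lemma argmax (f : nat -> nat) n : exists j, j <= n /\ forall i, i <= n -> f i <= f j.
Proof.
  induction n.
  - exists 0. split; auto. intros i Hi. assert (i = 0) by lia. subst; auto.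
  - destruct IHn as [j [Hj Hm]]. destruct (le_lt_dec (f (S n)) (f j)).
    + exists j. split; [lia|]. intros i Hi. destruct (Nat.eq_dec i (S n)); subst; auto.
      apply Hm; lia.
    + exists (S n). split; auto. intros i Hi. destruct (Nat.eq_dec i (S n)); subst; auto.
      specialize (Hm i ltac:(lia)). lia.
Qed.

Lemma core_abs m (qe qo : nat -> nat) (hs : nat -> T) (gs : nat -> nat) K :
  0 < m ->
  (forall i, i < m -> hs i <> one) ->
  (forall i, i < m -> G (eG (gs i)) /\ (exists n, eG (gs i) n <> n) /\ gs i <= K) ->
  (forall i, i < m -> qe i = rho (hs i) (qo i)) ->
  (forall i, i < m -> qo i = eG (gs i) (qe (S i))) ->
  qe m = qe 0 -> tm (qe 0) <= K.
Proof.
  intros Hm Hhs Hgs R1 R2 Hcyc.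
  destruct (argmax (fun i => tm (qe i)) m) as [je [Hje Hmaxe]].
  destruct (argmax (fun i => tm (qo i)) (m - 1)) as [jo [Hjo Hmaxo]]. simpl in *.
  apply Nat.nlt_ge; intro HK.
  assert (He0 := Hmaxe 0 ltac:(lia)).
  destruct (le_lt_dec (tm (qo jo)) (tm (qe je))) as [Hc|Hc].
  - assert (Hi: exists i, i < m /\ qe i = qe je).
    { destruct (Nat.eq_dec je m); [exists 0; split; [lia| congruence]| exists je; split; [lia|auto]]. }
    destruct Hi as [i [Him Hqi]].
    assert (Hmo : forall i', i' < m -> tm (qo i') <= tm (qe i))
      by (intros; rewrite Hqi; specialize (Hmaxo i' ltac:(lia)); lia).
    assert (Hme : forall i', i' <= m -> tm (qe i') <= tm (qe i))
      by (intros; rewrite Hqi; auto).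
    destruct (forced_or_chosen (qe i)) as [Hf|Hch].
    + rewrite (R1 i Him) in Hf. pose proof (LH1 (hs i) (qo i) (Hhs i Him) Hf) as Hl.
      rewrite <- (R1 i Him) in Hl. specialize (Hmo i Him). lia.
    + destruct i as [|i'].
      * destruct (Hgs (m-1) ltac:(lia)) as [HGg [Hng Hk]].
        assert (Hl := LG2 (gs (m-1)) (qe 0) HGg Hng ltac:(lia) Hch).
        replace (qe 0) with (qe (S (m - 1))) in Hl at 2 by (replace (S (m-1)) with m by lia; auto).
        rewrite <- R2 in Hl by lia. specialize (Hmo (m-1) ltac:(lia)). lia.
      * destruct (Hgs i' ltac:(lia)) as [HGg [Hng Hk]].
        specialize (Hme 0 ltac:(lia)).
        assert (Hl := LG2 (gs i') (qe (S i')) HGg Hng ltac:(lia) Hch).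
        rewrite <- R2 in Hl by lia. specialize (Hmo i' ltac:(lia)). lia.
  - assert (Hjm : jo < m) by lia.
    destruct (forced_or_chosen (qo jo)) as [Hf|Hch].
    + pose proof (LH2 (hs jo) (qo jo) (Hhs jo Hjm) Hf) as Hl.
      rewrite <- (R1 jo Hjm) in Hl. specialize (Hmaxe jo ltac:(lia)). lia.
    + destruct (Hgs jo Hjm) as [HGg [Hng Hk]].
      rewrite (R2 jo Hjm) in Hch.
      assert (Hl := LG1 (gs jo) (qe (S jo)) HGg Hng ltac:(rewrite <- (R2 jo Hjm); lia) Hch).
      rewrite <- (R2 jo Hjm) in Hl. specialize (Hmaxe (S jo) ltac:(lia)). lia.
Qed.

Fixpoint evalP (P : list (T * (nat -> nat))) (n : nat) : nat :=
  match P with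
  | [] => n
  | (h, g) :: P' => rho h (g (evalP P' n))
  end.

Lemma skipn_nth {A} (P : list A) i d : i < length P -> skipn i P = nth i P d :: skipn (S i) P.
Proof.
  revert i; induction P; simpl; intros i Hi; [lia|]. destruct i; simpl; auto.
  apply IHP; lia.
Qed.

Lemma core_list P K x : P <> [] ->
  (forall h g, In (h, g) P -> h <> one /\ G g /\ (exists n, g n <> n) /\
       exists k, k <= K /\ eG k = g) ->
  evalP P x = x -> tm x <= K.
Proof.
  intros Hne Hall Hfix.
  set (d := (one, fun n : nat => n)).
  assert (Hk : forall i, i < length P -> exists k, k <= K /\ eG k = snd (nth i P d)).
  { intros i Hi. pose proof (nth_In P d Hi) as Hin. destruct (nth i P d) as [h g].
    destruct (Hall h g Hin) as [_ [_ [_ Hk]]]. exact Hk. }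
  set (gs := fun i => match excluded_middle_informative
                        (exists k, k <= K /\ eG k = snd (nth i P d)) with
                      | left e => proj1_sig (constructive_indefinite_description _ e)
                      | right _ => 0 end).
  assert (Hgs : forall i, i < length P -> gs i <= K /\ eG (gs i) = snd (nth i P d)).
  { intros i Hi. unfold gs. destruct excluded_middle_informative as [e|e].
    - apply (proj2_sig (constructive_indefinite_description _ e)).
    - exfalso; apply e; auto. }
  set (qe := fun i => evalP (skipn i P) x).
  set (qo := fun i => snd (nth i P d) (qe (S i))).
  assert (E := core_abs (length P) qe qo (fun i => fst (nth i P d)) gs K).
  replace (qe 0) with x in E by (unfold qe; simpl; auto).
  apply E.
  - destruct P; [contradiction|simpl; lia].
  - intros i Hi. pose proof (nth_In P d Hi) as Hin. destruct (nth i P d) as [h g].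
    apply (Hall h g Hin).
  - intros i Hi. destruct (Hgs i Hi) as [H1 H2]. rewrite H2.
    pose proof (nth_In P d Hi) as Hin. destruct (nth i P d) as [h g].
    destruct (Hall h g Hin) as [_ [A [B _]]]. auto.
  - intros i Hi. unfold qe, qo. rewrite (skipn_nth P i d Hi).
    destruct (nth i P d) as [h g]. reflexivity.
  - intros i Hi. unfold qo. rewrite (proj2 (Hgs i Hi)). reflexivity.
  - unfold qe. rewrite skipn_all. simpl. auto.
Qed.


Hypothesis HeG : forall f, G f -> exists k, eG k = f.

Lemma G_id : G (fun n => n).
Proof. apply HG. Qed.
Lemma G_comp f g : G f -> G g -> G (fun n => f (g n)).
Proof. intros. apply (proj1 (proj2 (proj2 HG)) f g); auto. Qed.

Lemma cof_ext f f' : (forall n, f n = f' n) -> cofinitary_perm f -> cofinitary_perm f'.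
Proof.
  intros E [Hid|[N HN]]; [left|right].
  - intro n; rewrite <- E; auto.
  - exists N. intros n Hn. apply HN. rewrite E; auto.
Qed.

Definition mxa (a : nat -> nat) N := listmax (map a (seq 0 N)).

Lemma cof_conj a ainv u f : (forall n, ainv (a n) = n) -> (forall n, a (ainv n) = n) ->
  cofinitary_perm u -> (forall n, f (a n) = a (u n)) -> cofinitary_perm f.
Proof.
  intros Ha1 Ha2 [Hid|[N HN]] Hf.
  - left. intro x. rewrite <- (Ha2 x), Hf, Hid. reflexivity.
  - right. exists (S (mxa a N)). intros x Hx.
    rewrite <- (Ha2 x) in Hx. rewrite Hf in Hx.
    apply (f_equal ainv) in Hx. rewrite !Ha1 in Hx. apply HN in Hx.
    rewrite <- (Ha2 x). unfold mxa.
    assert (In (a (ainv x)) (map a (seq 0 N))) as Hin.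
    { apply in_map. apply in_seq. lia. }
    apply In_le_listmax in Hin. lia.
Qed.

Lemma evalP_app P Q n : evalP (P ++ Q) n = evalP P (evalP Q n).
Proof. induction P as [|[h g] P IH]; simpl; [reflexivity|]. rewrite IH; reflexivity. Qed.

Definition validP (P : list (T * (nat -> nat))) := forall h g, In (h, g) P -> G g.

Lemma exK P : validP P -> exists K, forall h g, In (h, g) P -> exists k, k <= K /\ eG k = g.
Proof.
  induction P as [|[h0 g0] P IH]; intros V.
  - exists 0. intros h g [].
  - destruct IH as [K HK]. { intros h g Hin. apply (V h g). simpl; auto. }
    destruct (HeG g0 (V h0 g0 (or_introl eq_refl))) as [k0 Hk0].
    exists (Nat.max K k0). intros h g [E|Hin].
    + inversion E; subst. exists k0; split; auto; lia.
    + destruct (HK h g Hin) as [k [Hk1 Hk2]]. exists k; split; auto; lia.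
Qed.

Lemma P_cof_step m
  (IH : forall g0 P, length P < m -> G g0 -> validP P -> cofinitary_perm (fun n => g0 (evalP P n))) :
  forall P, length P = m -> P <> [] -> validP P -> cofinitary_perm (evalP P).
Proof.
  intros P Hlen Hne V.
  assert (VA : forall P1 P2 h g, P = P1 ++ (h, g) :: P2 -> G g /\ validP P1 /\ validP P2).
  { intros P1 P2 h g E. subst P. split; [|split].
    - apply (V h). apply in_app_iff; simpl; auto.
    - intros h' g' Hin; apply (V h'). apply in_app_iff; auto.
    - intros h' g' Hin; apply (V h'). apply in_app_iff; simpl; auto. }
  destruct (classic (exists P1 g P2, P = P1 ++ (one, g) :: P2)) as [[P1 [g [P2 E]]]|NA].
  { destruct (VA _ _ _ _ E) as [Vg [V1 V2]].
    rewrite E in Hlen. rewrite length_app in Hlen. simpl in Hlen.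
    destruct P1 as [|x P1'].
    - apply (cof_ext (fun n => g (evalP P2 n))).
      + intro n. rewrite E. simpl. rewrite rho_one. auto.
      + apply IH; auto. simpl in Hlen; lia.
    - destruct (exists_last (l := x :: P1') ltac:(discriminate)) as [P1'' [[h' g'] E1]].
      rewrite E1 in E, V1, Hlen.
      apply (cof_ext (fun n => (fun n => n) (evalP (P1'' ++ (h', fun n => g' (g n)) :: P2) n))).
      + intro n. rewrite E. rewrite !evalP_app. simpl. rewrite ?evalP_app. simpl.
        rewrite rho_one. reflexivity.
      + apply (IH (fun n => n)); auto.
        * rewrite !length_app in *. simpl in *. lia.
        * apply G_id.
        * intros h0 g0 Hin. apply in_app_iff in Hin. destruct Hin as [Hin|[Eq|Hin]].
          -- apply (V1 h0). apply in_app_iff; auto.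
          -- injection Eq as E3 E4. subst g0. apply G_comp; auto. apply (V1 h'). apply in_app_iff; simpl; auto.
          -- apply (V2 h0); auto. }
  destruct (classic (exists P1 h g h2 g2 P2, P = P1 ++ (h, g) :: (h2, g2) :: P2 /\
                       forall n, g n = n)) as [[P1 [h [g [h2 [g2 [P2 [E Eg]]]]]]]|NB].
  { destruct (VA _ _ _ _ E) as [Vg [V1 V2]].
    assert (Vg2 : G g2) by (apply (V2 h2); simpl; auto).
    apply (cof_ext (fun n => (fun n => n) (evalP (P1 ++ (mul h h2, g2) :: P2) n))).
    + intro n. rewrite E. rewrite !evalP_app. simpl. rewrite Eg, rho_mul. auto.
    + apply (IH (fun n => n)); auto.
      * rewrite <- Hlen, E, !length_app. simpl. lia.
      * apply G_id.
      * intros h0 g0 Hin. apply in_app_iff in Hin. destruct Hin as [Hin|[Eq|Hin]].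
        -- apply (V1 h0); auto.
        -- inversion Eq; subst; auto.
        -- apply (V2 h0); simpl; auto. }
  destruct (classic (exists P1 h g, P = P1 ++ [(h, g)] /\ forall n, g n = n))
    as [[P1 [h [g [E Eg]]]]|NC].
  { destruct (VA _ _ _ _ E) as [Vg [V1 _]].
    destruct P1 as [|[h1 g1] P1'].
    - destruct (classic (h = one)) as [->|Hh].
      + left. intro n. rewrite E. simpl. rewrite Eg, rho_one. auto.
      + right. exists 0. intros n Hn. rewrite E in Hn. simpl in Hn. rewrite Eg in Hn.
        apply rho_fix in Hn. contradiction.
    - apply (cof_conj (rho h1) (rho (inv h1))
               (fun n => g1 (evalP (P1' ++ [(mul h h1, fun n => n)]) n))).
      + intro; apply rho_inv1.
      + intro; apply rho_inv2.
      + apply IH.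
        * rewrite <- Hlen, E, !length_app. simpl. lia.
        * apply (V1 h1); simpl; auto.
        * intros h0 g0 Hin. apply in_app_iff in Hin. destruct Hin as [Hin|[Eq|[]]].
          -- apply (V1 h0); simpl; auto.
          -- inversion Eq; subst. apply G_id.
      + intro n. rewrite E. simpl. rewrite !evalP_app. simpl. rewrite Eg, rho_mul. auto. }
  destruct (exK P V) as [K HK].
  right. exists (S (listmax (map snd (Lst (S K))))). intros x Hx.
  assert (Ht : tm x <= K).
  { apply (core_list P K x Hne); auto.
    intros h g Hin. split; [|split; [apply (V h); auto|split; [|apply (HK h g Hin)]]].
    - intro Eh; subst h. apply NA. destruct (in_split _ _ Hin) as [l1 [l2 E]]. eauto.
    - apply NNPP. intro Nn. destruct (in_split _ _ Hin) as [l1 [l2 E]].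
      assert (Eg : forall n, g n = n) by (intro n; apply NNPP; intro; apply Nn; eauto).
      destruct l2 as [|[h2 g2] l2].
      + apply NC. exists l1, h, g. auto.
      + apply NB. exists l1, h, g, h2, g2, l2. auto. }
  assert (Hin : In (pos x, x) (Lst (S K))) by (apply (Lst_mono (S (tm x))); [lia|apply tm_in]).
  apply (in_map snd) in Hin. apply In_le_listmax in Hin. exact (le_n_S _ _ Hin).
Qed.

Lemma nf_cof m : forall g0 P, length P < m -> G g0 -> validP P ->
  cofinitary_perm (fun n => g0 (evalP P n)).
Proof.
  induction m; intros g0 P Hl Hg0 V; [lia|].
  destruct (Nat.eq_dec (length P) m) as [Em|Em]; [|apply IHm; auto; lia].
  destruct P as [|x P'] eqn:EP.
  - apply (cof_ext g0); [intro; reflexivity|]. apply Hcof; auto.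
  - rewrite <- EP in *.
    destruct (exists_last (l := P) ltac:(rewrite EP; discriminate)) as [P1 [[h g] E1]].
    destruct (proj1 HG _ Hg0) as [gi [Hgi1 Hgi2]].
    assert (Vg : G g) by (apply (V h); rewrite E1; apply in_app_iff; simpl; auto).
    apply (cof_conj g0 gi (evalP (P1 ++ [(h, fun n => g (g0 n))]))); auto.
    + apply (P_cof_step m IHm).
      * rewrite length_app, <- Em, E1, length_app. reflexivity.
      * destruct P1; discriminate.
      * intros h0 g0' Hin. apply in_app_iff in Hin. destruct Hin as [Hin|[Eq|[]]].
        -- apply (V h0). rewrite E1. apply in_app_iff; auto.
        -- inversion Eq; subst. apply G_comp; auto.
    + intro n. rewrite E1, !evalP_app. reflexivity.
Qed.


Inductive letter := LG (g : nat -> nat) | LH (h : T).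
Definition evl (l : letter) : nat -> nat :=
  match l with LG g => g | LH h => rho h end.
Fixpoint eval (w : list letter) (n : nat) : nat :=
  match w with [] => n | l :: w' => evl l (eval w' n) end.
Definition validL (l : letter) : Prop := match l with LG g => G g | LH _ => True end.
Definition validW (w : list letter) := forall l, In l w -> validL l.

Lemma eval_app w1 w2 n : eval (w1 ++ w2) n = eval w1 (eval w2 n).
Proof. induction w1; simpl; [reflexivity|]. rewrite IHw1; reflexivity. Qed.

Fixpoint toNF (w : list letter) : (nat -> nat) * list (T * (nat -> nat)) :=
  match w with
  | [] => (fun n => n, [])
  | LG g :: w' => let '(g0, P) := toNF w' in (fun n => g (g0 n), P)
  | LH h :: w' => let '(g0, P) := toNF w' in (fun n => n, (h, g0) :: P)
  end.

Lemma toNF_ok w : validW w -> G (fst (toNF w)) /\ validP (snd (toNF w)) /\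
  forall n, eval w n = fst (toNF w) (evalP (snd (toNF w)) n).
Proof.
  induction w as [|l w IH]; intros V.
  - simpl. split; [apply G_id|split; [intros h g []|auto]].
  - destruct IH as [IH1 [IH2 IH3]]. { intros l' Hl'; apply V; simpl; auto. }
    assert (Vl : validL l) by (apply V; simpl; auto).
    destruct l as [g|h]; simpl; destruct (toNF w) as [g0 P]; simpl in *.
    + split; [apply G_comp; auto|split; [auto|]].
      intro n; rewrite IH3; reflexivity.
    + split; [apply G_id|split].
      * intros h' g' [E|Hin]; [inversion E; subst; auto|eauto].
      * intro n; rewrite IH3; reflexivity.
Qed.

Lemma letter_inv l : validL l -> exists l', validL l' /\
  (forall n, evl l' (evl l n) = n) /\ (forall n, evl l (evl l' n) = n).
Proof.
  destruct l as [g|h]; simpl; intro V.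
  - destruct (proj1 HG _ V) as [gi [H1 H2]]. exists (LG gi). simpl.
    split; auto. apply (proj2 (proj2 (proj2 HG)) g gi); auto.
  - exists (LH (inv h)). simpl. split; auto. split; intro; [apply rho_inv1|apply rho_inv2].
Qed.

Lemma word_inv w : validW w -> exists w', validW w' /\
  (forall n, eval w' (eval w n) = n) /\ (forall n, eval w (eval w' n) = n).
Proof.
  induction w as [|l w IH]; intros V.
  - exists []. split; [intros l []|simpl; auto].
  - destruct IH as [w' [V' [I1 I2]]]. { intros l' Hl'; apply V; simpl; auto. }
    destruct (letter_inv l (V l (or_introl eq_refl))) as [l' [Vl [J1 J2]]].
    exists (w' ++ [l']). split; [|split].
    + intros x Hx. apply in_app_iff in Hx. destruct Hx as [Hx|[<-|[]]]; auto.
    + intro n. rewrite eval_app. simpl. rewrite J1. auto.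
    + intro n. rewrite eval_app. simpl. rewrite I2. auto.
Qed.

Lemma gen_word f : gen (fun f => G f \/ exists k, rho (eH k) = f) f ->
  exists w, validW w /\ forall n, f n = eval w n.
Proof.
  induction 1 as [f [Hf|[k Hk]] | | f g _ [w1 [V1 E1]] _ [w2 [V2 E2]] | f g _ [w [V E]] Hgf Hfg].
  - exists [LG f]. split; [intros l [<-|[]]; simpl; auto | simpl; auto].
  - exists [LH (eH k)]. split; [intros l [<-|[]]; simpl; auto | simpl; subst; auto].
  - exists []. split; [intros l []|simpl; auto].
  - exists (w1 ++ w2). split.
    + intros l Hl. apply in_app_iff in Hl. destruct Hl; auto.
    + intro n. unfold compose. rewrite eval_app, E2, E1. reflexivity.
  - destruct (word_inv w V) as [w' [V' [I1 I2]]]. exists w'. split; auto.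
    intro n. transitivity (g (f (eval w' n))); [rewrite E, I2; reflexivity|apply Hgf].
Qed.

Lemma final : exists fs : nat -> (nat -> nat),
    (forall k, is_perm (fs k)) /\
    iso_to_perm_group H (gen (fun f => exists k, fs k = f)) /\
    cofinitary_group (gen (fun f => G f \/ exists k, fs k = f)).
Proof.
  exists (fun k => rho (eH k)). split; [|split].
  - intro k. exists (rho (inv (eH k))). split; intro; [apply rho_inv1|apply rho_inv2].
  - exists rho. split; [|split; [|split]].
    + intros x y. apply functional_extensionality. intro n. apply rho_mul.
    + intros x y E. apply (f_equal (fun f => pos (f (bet (one, 0))))) in E.
      unfold rho in E. rewrite !pos_bet in E. simpl in E. inversion E as [E1].
      rewrite !mulr1 in E1. auto.
    + intro x. apply gen_base. destruct (HeH x) as [k Hk]. exists k. subst; auto.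
    + induction 1 as [f [k Hk] | | f g _ [x Hx] _ [y Hy] | f g _ [x Hx] Hgf Hfg].
      * exists (eH k); auto.
      * exists one. apply functional_extensionality. apply rho_one.
      * exists (mul x y). subst. apply functional_extensionality. intro n. apply rho_mul.
      * exists (inv x). subst f. apply functional_extensionality. intro n.
        rewrite <- (Hgf (rho (inv x) n)), rho_inv2. reflexivity.
  - intros f Hf. destruct (gen_word f Hf) as [w [V E]].
    destruct (toNF_ok w V) as [N1 [N2 N3]].
    apply (cof_ext (fun n => fst (toNF w) (evalP (snd (toNF w)) n))).
    + intro n. rewrite E, N3. reflexivity.
    + apply (nf_cof (S (length (snd (toNF w))))); auto.
Qed.

End Constr.

Theorem mainTheorem11 (G : (nat -> nat) -> Prop)
  (HG : is_subgroup_Sym G) (Hcof : cofinitary_group G) (Hcnt : countable_set G)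
  (T : Type) (H : group_on T) (HT : countable_type T) :
  exists fs : nat -> (nat -> nat),
    (forall k, is_perm (fs k)) /\
    iso_to_perm_group H (gen (fun f => exists k, fs k = f)) /\
    cofinitary_group (gen (fun f => G f \/ exists k, fs k = f)).
Proof.
  destruct Hcnt as [eG HeG]. destruct HT as [eH HeH].
  exact (final G HG Hcof eG T H eH HeH HeG).
Qed.
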